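(* Let $\Gamma\in\mathcal S$ with embedding $\varphi$ into $\mathbb Z^n$, and let $v_{i_1},\dots,v_{i_k}$ be vertices of $\Gamma$ spanning a connected subtree. Then $w=\sum_{j=1}^k\varphi(v_{i_j})$ is of the form $E_a-\sum_{j\in J}E_j$ or $-2E_a-\sum_{j\in J}E_j$ for some index $a$ and subset $J\subset\{1,\dots,n\}$ with $a\notin J$.
   Context: A plumbing tree is a finite tree $\Gamma$ each of whose vertices $v$ carries an integer decoration $d(v)$. $\Gamma$ is minimal if no vertex has decoration $-1$. For $n\ge 1$ let $(\mathbb Z^n,Q_n)$ be the lattice with basis $E_1,\dots,E_n$ and $Q_n(E_i,E_j)=-\delta_{ij}$, and let $K=\sum_{i=1}^n E_i$. A plumbing tree $\Gamma$ on $n$ vertices is a symplectic plumbing tree if there is a map $\varphi$ (an embedding) from its vertex set to $\mathbb Z^n$ such that: for distinct vertices $v_1,v_2$, $Q_n(\varphi(v_1),\varphi(v_2))$ is $1$ if they are adjacent and $0$ otherwise; $Q_n(\varphi(v),\varphi(v))=d(v)$ for every $v$; and $Q_n(\varphi(v),K)+Q_n(\varphi(v),\varphi(v))=-2$ for every $v$. $\mathcal S$ is the set of minimal, connected symplectic plumbing trees. *)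

(* Defs.v *)
From mathcomp Require Import all_boot all_order all_algebra.
Set Implicit Arguments. Unset Strict Implicit. Unset Printing Implicit Defensive.
Import Order.TTheory GRing.Theory Num.Theory.
Local Open Scope ring_scope.

Definition vecZ (n : nat) := 'I_n -> int.

Definition Qn (n : nat) (x y : vecZ n) : int := - \sum_(i < n) x i * y i.

Definition Evec (n : nat) (a : 'I_n) : vecZ n := fun i => (i == a)%:Z.

Definition Kvec (n : nat) : vecZ n := fun _ => 1.

Definition simple_graph (n : nat) (e : rel 'I_n) : Prop :=
  symmetric e /\ irreflexive e.

Definition is_tree (n : nat) (e : rel 'I_n) : Prop :=
  [/\ simple_graph e,
      (forall u v : 'I_n, connect e u v) &
      (forall c : seq 'I_n, uniq c -> (3 <= size c)%N -> ~~ cycle e c)].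

(* Plumbing tree: a tree with integer decorations d. *)
Definition minimal (n : nat) (d : 'I_n -> int) : Prop :=
  forall v, d v != -1.

Definition symplectic_embedding (n : nat) (e : rel 'I_n) (d : 'I_n -> int)
  (phi : 'I_n -> vecZ n) : Prop :=
  [/\ (forall v1 v2 : 'I_n, v1 != v2 ->
         Qn (phi v1) (phi v2) = (if e v1 v2 then 1 else 0)),
      (forall v, Qn (phi v) (phi v) = d v) &
      (forall v, Qn (phi v) (@Kvec n) + Qn (phi v) (phi v) = -2)].

Definition spans_connected_subtree (n : nat) (e : rel 'I_n) (S : {set 'I_n}) : Prop :=
  S != set0 /\
  forall u v, u \in S -> v \in S ->
    connect [rel x y | [&& e x y, x \in S & y \in S]] u v.

(* Main.v *)
Require Import Defs.
From mathcomp Require Import all_boot all_order all_algebra zify.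
Import Order.TTheory GRing.Theory Num.Theory.
Set Implicit Arguments. Unset Strict Implicit. Unset Printing Implicit Defensive.
Local Open Scope ring_scope.

Lemma t_cases (x : int) : x = -2 \/ x = -1 \/ x = 0 \/ x = 1 \/ 6 <= x * (x + 1).
Proof.
have [h|[h|h]] : x <= -3 \/ (-2 <= x <= 1) \/ 2 <= x by lia.
- do 4 right. nia.
- lia.
- do 4 right. nia.
Qed.

Definition G n (x : vecZ n) : int := \sum_(i < n) x i * (x i + 1).

Lemma sumEvec n (J : {set 'I_n}) i : \sum_(j in J) Evec j i = (i \in J)%:Z.
Proof.
case: (boolP (i \in J)) => hi.
- rewrite (bigD1 i) //= /Evec eqxx big1 ?addr0 // => j /andP[_ hj].
  by rewrite eq_sym (negbTE hj).
- rewrite big1 // => j hj; rewrite /Evec; case: eqP => // eij; by rewrite eij hj in hi.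
Qed.

Lemma G2_form n (w : vecZ n) : G w = 2 ->
  exists (a : 'I_n) (J : {set 'I_n}),
    a \notin J /\
    ((forall i, w i = Evec a i - \sum_(j in J) Evec j i) \/
     (forall i, w i = - 2 * Evec a i - \sum_(j in J) Evec j i)).
Proof.
move=> HG.
have t0 i : 0 <= w i * (w i + 1).
  by case: (t_cases (w i)) => [->|[->|[->|[->|h]]]] //; lia.
case: (pickP (fun i => w i * (w i + 1) != 0)) => [a Ha | Hall]; last first.
  move: HG; rewrite /G big1 // => i _; by move/negbFE/eqP: (Hall i).
have ta : w a * (w a + 1) = 2.
  move: HG; rewrite /G (bigD1 a) //=.
  have hs : 0 <= \sum_(i < n | i != a) w i * (w i + 1) by apply: sumr_ge0 => i _; apply: t0.
  case: (t_cases (w a)) Ha => [->|[->|[->|[->|h]]]] //= _; move: (\sum_(i < n | i != a) _) hs => s hs; try lia; move: (w a * _) h => t h; lia.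
have rest i : i != a -> w i * (w i + 1) = 0.
  move=> hi; move: HG; rewrite /G (bigD1 a) //= ta => /(congr1 (fun x => x - 2)).
  rewrite addrC addrK subrr => hsum.
  by apply: (psumr_eq0P _ hsum) => // j _; apply: t0.
have wa : w a = 1 \/ w a = -2.
  case: (t_cases (w a)) ta => [->|[->|[->|[->|h]]]] //= ta'; try lia.
have wo i : i != a -> w i = 0 \/ w i = -1.
  move=> /rest; case: (t_cases (w i)) => [->|[->|[->|[->|h6]]]] //=; nia.
exists a, [set i | w i == -1]; split.
  by rewrite inE; case: wa => ->.
have key i : i != a -> w i = - \sum_(j in [set i | w i == -1]) Evec j i.
  move=> hi; rewrite sumEvec inE; case: (wo i hi) => ->; nia.
case: wa => wa; [left|right] => i; (case: (eqVneq i a) => [->|hi];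
  [by rewrite sumEvec inE wa /Evec eqxx | by rewrite {1}key // [Evec a i]/Evec (negbTE hi) ?mulr0 sub0r]).
Qed.

Definition relT n (e : rel 'I_n) (T : {set 'I_n}) : rel 'I_n :=
  [rel x y | [&& e x y, x \in T & y \in T]].
Definition connT n (e : rel 'I_n) (T : {set 'I_n}) :=
  forall u v, u \in T -> v \in T -> connect (relT e T) u v.

Lemma path_in n (r : rel 'I_n) (T : {set 'I_n}) x p :
  (forall a b, r a b -> b \in T) -> path r x p -> forall y, y \in p -> y \in T.
Proof.
move=> hr; elim: p x => [|z p IH] x //= /andP[hxz hp] y.
rewrite inE => /orP[/eqP->|]; [exact: hr hxz | exact: IH hp y].
Qed.

Lemma exit_edge n (r : rel 'I_n) (T : {set 'I_n}) p x :
  x \in T -> last x p \notin T -> path r x p ->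
  exists u v, [/\ u \in T, v \notin T & r u v].
Proof.
elim: p x => [|z p IH] x hx /=; first by rewrite hx.
move=> hl /andP[hxz hp]; case: (boolP (z \in T)) => hz; first exact: IH hl hp.
by exists x, z.
Qed.

Lemma unique_nb n (e : rel 'I_n) T v u1 u2 : is_tree e -> connT e T -> v \notin T ->
  e v u1 -> e v u2 -> u1 \in T -> u2 \in T -> u1 = u2.
Proof.
case=> [[esym _] _ acyc] hc hv h1 h2 i1 i2.
apply/eqP/negPn/negP => hne.
move/connectP: (hc _ _ i1 i2) => [p hp hl].
move: hl; case/shortenP: hp => p' hp' uq' _ hl.
have inT : forall y, y \in p' -> y \in T.
  by apply: (@path_in _ (relT e T) T u1) => // a b /and3P[].
have hsz : (3 <= size (v :: u1 :: p'))%N.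
  by case: p' hp' uq' inT hl => [|z q] //= _ _ _ hl; rewrite hl eqxx in hne.
have huq : uniq (v :: u1 :: p').
  rewrite cons_uniq uq' andbT inE; apply/negP => /orP[/eqP hv1|/inT h].
  - by rewrite hv1 i1 in hv.
  - by rewrite h in hv.
move/negP: (acyc _ huq hsz); apply.
rewrite /cycle /= h1 rcons_path -hl esym h2 andbT.
by apply: sub_path hp' => a b /and3P[].
Qed.

Lemma connT_add n (e : rel 'I_n) T v u : symmetric e -> connT e T -> u \in T -> e u v ->
  connT e (v |: T).
Proof.
move=> esym hc hu huv.
have mono a b : connect (relT e T) a b -> connect (relT e (v |: T)) a b.
  apply: connect_sub => c d /and3P[h1 h2 h3]; apply: connect1.
  by rewrite /relT /= h1 !inE h2 h3 !orbT.
have euv : relT e (v |: T) u v by rewrite /relT /= huv !inE hu eqxx !orbT.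
have evu : relT e (v |: T) v u by rewrite /relT /= esym huv !inE hu eqxx !orbT.
have ev a : a \in T -> connect (relT e (v |: T)) a v.
  by move=> ha; apply: connect_trans (mono _ _ (hc a u ha hu)) (connect1 euv).
have ve a : a \in T -> connect (relT e (v |: T)) v a.
  by move=> ha; apply: connect_trans (connect1 evu) (mono _ _ (hc u a hu ha)).
move=> a b; rewrite !inE => /orP[/eqP->|ha] /orP[/eqP->|hb].
- exact: connect0.
- exact: ve.
- exact: ev.
- exact: mono (hc a b ha hb).
Qed.

Definition wT n (phi : 'I_n -> vecZ n) (T : {set 'I_n}) : vecZ n :=
  fun i => \sum_(u in T) phi u i.

Lemma G_step n (phi : 'I_n -> vecZ n) (T : {set 'I_n}) (v : 'I_n) : v \notin T ->
  G (wT phi (v |: T)) = G (phi v) + G (wT phi T)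
     + 2 * \sum_(u in T) \sum_(i < n) phi u i * phi v i.
Proof.
move=> hv; rewrite /G /wT.
under eq_bigr => i _ do rewrite big_setU1 //=.
rewrite exchange_big /= mulr_sumr -!big_split /=.
apply: eq_bigr => i _.
rewrite -mulr_suml.
move: (phi v i) (\sum_(u in T) phi u i) => x y.
nia.
Qed.

Theorem corollary3p2 (n : nat) (e : rel 'I_n) (d : 'I_n -> int)
  (phi : 'I_n -> vecZ n) (S : {set 'I_n}) :
  (0 < n)%N ->
  is_tree e -> minimal d -> symplectic_embedding e d phi ->
  spans_connected_subtree e S ->
  exists (a : 'I_n) (J : {set 'I_n}),
    a \notin J /\
    let w : vecZ n := fun i => \sum_(v in S) phi v i in
    ((forall i, w i = Evec a i - \sum_(j in J) Evec j i) \/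
     (forall i, w i = - 2 * Evec a i - \sum_(j in J) Evec j i)).
Proof.
move=> _ htree _ [Hq Hd Hk] [Sne Sconn].
have esym : symmetric e by case: htree => [[]].
have Gphi v : G (phi v) = 2.
  have := Hk v; rewrite /Qn /Kvec /G -opprD -big_split /= => /eqP.
  rewrite eqr_opp => /eqP <-; apply: eq_bigr => i _; lia.
have dotE u v : u != v -> \sum_(i < n) phi u i * phi v i = - (if e u v then 1 else 0).
  by move=> huv; rewrite -(Hq u v huv) /Qn opprK.
have main : forall m (T : {set 'I_n}), (#|S| - #|T| <= m)%N -> T \subset S -> T != set0 ->
    connT e T -> G (wT phi T) = 2 -> G (wT phi S) = 2.
  elim=> [|m IH] T hm hTS hT0 hc hG.
    have /eqP <- // : T == S.
    by rewrite eqEcard hTS /= -subn_eq0 -leqn0.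
  case: (eqVneq T S) => [<-|hne] //.
  have /subsetPn [y yS yT] : ~~ (S \subset T).
    by apply/negP => h; apply/eqP: hne; rewrite eqEsubset hTS h.
  case/set0Pn: hT0 => x xT.
  move/connectP: (Sconn x y (subsetP hTS x xT) yS) => [p hp hl].
  have hlT : last x p \notin T by rewrite -hl.
  have [u [v [uT vT /and3P[huv uS vS]]]] := exit_edge xT hlT hp.
  apply: (IH (v |: T)).
  - by rewrite cardsU1 vT; move: hm; lia.
  - by rewrite subUset sub1set vS hTS.
  - by apply/set0Pn; exists v; rewrite setU11.
  - exact: (connT_add esym hc uT huv).
  - rewrite G_step // Gphi hG.
    have -> : \sum_(u0 in T) \sum_(i < n) phi u0 i * phi v i = -1.
      rewrite (bigD1 u) //= [X in _ + X]big1 ?addr0.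
        rewrite dotE ?huv //; apply/eqP => eq; by rewrite -eq uT in vT.
      move=> u' /andP[u'T u'u]; rewrite dotE; last first.
        by apply/eqP => eq; rewrite -eq u'T in vT.
      case: ifP => // h'; exfalso.
      have hvu : e v u by rewrite esym.
      have hvu2 : e v u' by rewrite esym.
      have := unique_nb htree hc vT hvu hvu2 uT u'T.
      by move=> eq; rewrite eq eqxx in u'u.
    by [].
case/set0Pn: Sne => x xS.
have hS : G (wT phi S) = 2.
  apply: (main #|S| [set x]).
  - exact: leq_subr.
  - by rewrite sub1set.
  - by apply/set0Pn; exists x; rewrite set11.
  - move=> a b; rewrite !inE => /eqP -> /eqP ->; exact: connect0.
  - rewrite -(Gphi x); rewrite /G /wT; apply: eq_bigr => i _; by rewrite big_set1.
exact: (G2_form hS).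
Qed.
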